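(* Let $\delta_n=\frac{n+2}{n+1}$ and $\mu_n=n^{3/2}$ ($n\ge0$), let $p_n=\mu_{n+1}/\mu_n=\big(\frac{n+1}{n}\big)^{3/2}$, and let $g_n$ ($n\ge1$) be defined by $g_1=\frac{\mu_2}{\mu_1}\big(\frac{2\delta_2}{\delta_3}+\frac{\delta_1}{\delta_3}+1\big)-\frac{\mu_3}{\mu_1}$ and, for $n\ge2$, $$g_n=\frac{\mu_{n+1}}{\mu_n\delta_{n+1}\delta_{n+2}}\Big[2\delta_{n+1}^2+\delta_n\delta_{n+1}+\delta_{n+1}\delta_{n+2}-\frac{\mu_{n+2}}{\mu_{n+1}}\delta_{n+1}\delta_{n+2}-\frac{\mu_{n-1}}{\mu_n}\delta_n\delta_{n+1}-\frac{\mu_{n+1}}{\mu_n g_{n-1}}\delta_n\delta_{n+1}\Big].$$ Then for every $n\in\mathbb{N}$, $p_np_{n+1}<g_n<p_np_{n+1}p_{n+2}$ (in particular every $g_n$ is well defined and positive). *)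

(* Defs.v *)
From Stdlib Require Import Reals.
Open Scope R_scope.

Definition delta (n : nat) : R := (INR n + 2) / (INR n + 1).

Definition mu (n : nat) : R := sqrt (INR n ^ 3).

Definition p (n : nat) : R := mu (n + 1) / mu n.

Definition g1 : R :=
  mu 2 / mu 1 * (2 * delta 2 / delta 3 + delta 1 / delta 3 + 1) - mu 3 / mu 1.

Definition gstep (n : nat) (gprev : R) : R :=
  mu (n + 1) / (mu n * delta (n + 1) * delta (n + 2)) *
  (2 * delta (n + 1) ^ 2 + delta n * delta (n + 1) + delta (n + 1) * delta (n + 2)
   - mu (n + 2) / mu (n + 1) * delta (n + 1) * delta (n + 2)
   - mu (n - 1) / mu n * delta n * delta (n + 1)
   - mu (n + 1) / (mu n * gprev) * delta n * delta (n + 1)).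

(* g_n for n >= 1; g_0 is an unused dummy value (0). *)
Fixpoint g (n : nat) : R :=
  match n with
  | O => 0
  | S m => match m with
           | O => g1
           | S _ => gstep n (g m)
           end
  end.

(* Main.v *)
Require Import Defs.
From Stdlib Require Import Reals Lra Psatz Lia.
Open Scope R_scope.

Definition UB (p q : R) := p/q * (((p+q)^2 + 4*p*q)/(4*q*(p+q))).
Definition LB (p q : R) := p/q * (4*p*(p+q)/((p+q)^2 + 4*p*q)).
Definition rr (u v : R) := u/v * sqrt (u/v).

Ltac horner := repeat (first [ assumption | lra |
  apply Rplus_lt_le_0_compat | apply Rplus_le_le_0_compat | apply Rmult_le_pos ]).

Lemma Lrat (N : R) : 2 <= N ->
  0 < 2*((N+3)/(N+2)) + (N+2)/(N+1) + (N+4)/(N+3)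
      - 2 * UB (N+2) (N+1) * ((N+4)/(N+3)) - 2 * UB (N-1) N * ((N+2)/(N+1)).
Proof.
  intros HN. remember (N-2) as m. assert (E: N = m+2) by lra. subst N.
  assert (Hm : 0 <= m) by lra. clear Heqm HN.
  unfold UB.
  match goal with |- 0 < ?e => replace e with ((4285440 + m * (13428288 + m * (18006840 + m * (13604240 + m * (6395784 + m * (1943048 + m * (381664 + m * (46728 + m * (3232 + m * (96)))))))))) / (10886400 + m * (42845760 + m * (75534336 + m * (78776208 + m * (54027936 + m * (25596464 + m * (8550784 + m * (2014768 + m * (328224 + m * (35216 + m * (2240 + m * (64))))))))))))) end.
  2:{ field; repeat split; nra. }
  apply Rdiv_lt_0_compat; horner.
Qed.

Lemma Urat (N : R) : 2 <= N ->
  0 < LB (N+2) (N+1) * LB (N+3) (N+2) * ((N+4)/(N+3))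
      - (2*((N+3)/(N+2)) + (N+2)/(N+1) + (N+4)/(N+3)
         - LB (N+2) (N+1) * ((N+4)/(N+3)) - LB (N-1) N * ((N+2)/(N+1))
         - LB (N-1) N / UB (N+2) (N+1) * ((N+2)/(N+1))).
Proof.
  intros HN. remember (N-2) as m. assert (E: N = m+2) by lra. subst N.
  assert (Hm : 0 <= m) by lra. clear Heqm HN.
  unfold UB, LB.
  match goal with |- 0 < ?e => replace e with ((56836144532764800 + m * (493147165090518720 + m * (2025762501084711912 + m * (5242009447503449592 + m * (9591241496537777138 + m * (13203170444697861244 + m * (14205781040711268350 + m * (12251153721260643312 + m * (8616445261602763422 + m * (5001912068120338852 + m * (2416292995766240362 + m * (976356030489059024 + m * (330856773450684784 + m * (94048009129588344 + m * (22377734124782256 + m * (4436105709470960 + m * (727027362554240 + m * (97370007395840 + m * (10477917789184 + m * (883698378752 + m * (56244576256 + m * (2539520000 + m * (72482816 + m * (983040)))))))))))))))))))))))) / (330213765444192000 + m * (2978316764842651200 + m * (12758853598339634640 + m * (34571055797020147356 + m * (66558218111490320088 + m * (96959962807853856175 + m * (111121375758750457690 + m * (102830491335230377450 + m * (78245838101955976274 + m * (49596111754204261904 + m * (26429929472962929182 + m * (11917568805257159882 + m * (4565625572764282958 + m * (1489153202605404929 + m * (413617145857069248 + m * (97669739199740400 + m * (19536002271492480 + m * (3290308649253824 + m * (462534771531776 + m * (53595545397248 + m * (5029235236864 + m * (372542205952 + m * (20963393536 + m * (841940992 + m * (21495808 + m * (262144))))))))))))))))))))))))))) end.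
  2:{ field; repeat split; nra. }
  apply Rdiv_lt_0_compat; horner.
Qed.

Lemma sqrt_UB (p q : R) : 0 < p -> 0 < q ->
  sqrt (p/q) <= ((p+q)^2 + 4*p*q)/(4*q*(p+q)).
Proof.
  intros Hp Hq.
  set (z := ((p+q)^2 + 4*p*q)/(4*q*(p+q))).
  assert (Hz : 0 <= z).
  { unfold z. apply Rlt_le, Rdiv_lt_0_compat; nra. }
  rewrite <- (sqrt_pow2 z Hz). apply sqrt_le_1_alt.
  assert (E : z^2 - p/q = (p-q)^4/(16*q^2*(p+q)^2)).
  { unfold z. field. lra. }
  assert (0 <= (p-q)^4/(16*q^2*(p+q)^2)).
  { apply Rmult_le_pos. replace ((p-q)^4) with (((p-q)^2)^2) by ring.
    apply pow2_ge_0. apply Rlt_le, Rinv_0_lt_compat. repeat apply Rmult_lt_0_compat; try apply pow_lt; lra. }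
  lra.
Qed.

Lemma rr_UB (p q : R) : 0 < p -> 0 < q -> rr p q <= UB p q.
Proof.
  intros Hp Hq. unfold rr, UB. apply Rmult_le_compat_l.
  apply Rlt_le, Rdiv_lt_0_compat; lra. now apply sqrt_UB.
Qed.

Lemma rr_LB (p q : R) : 0 < p -> 0 < q -> LB p q <= rr p q.
Proof.
  intros Hp Hq. unfold rr, LB. apply Rmult_le_compat_l.
  apply Rlt_le, Rdiv_lt_0_compat; lra.
  pose proof (sqrt_UB p q Hp Hq) as H.
  set (z := ((p+q)^2 + 4*p*q)/(4*q*(p+q))) in H.
  assert (Hy : 0 < p/q) by (apply Rdiv_lt_0_compat; lra).
  assert (Hs : 0 < sqrt (p/q)) by (apply sqrt_lt_R0; lra).
  assert (Hzp : 0 < z) by lra.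
  replace (4*p*(p+q)/((p+q)^2 + 4*p*q)) with ((p/q)/z).
  2:{ unfold z. field. repeat split; nra. }
  apply (Rmult_le_reg_r z); [lra|].
  replace (p/q/z*z) with (p/q) by (field; lra).
  rewrite <- (sqrt_sqrt (p/q)) at 1 by lra.
  apply Rmult_le_compat_l; lra.
Qed.

Lemma UB_pos (p q : R) : 0 < p -> 0 < q -> 0 < UB p q.
Proof. intros. unfold UB. apply Rmult_lt_0_compat; apply Rdiv_lt_0_compat; nra. Qed.
Lemma LB_pos (p q : R) : 0 < p -> 0 < q -> 0 < LB p q.
Proof. intros. unfold LB. apply Rmult_lt_0_compat; apply Rdiv_lt_0_compat; nra. Qed.

Lemma Msqrt (t : R) : 0 <= t -> sqrt (t^3) = t * sqrt t.
Proof.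
  intros Ht. replace (t^3) with (t^2 * t) by ring.
  rewrite sqrt_mult; [|apply pow2_ge_0|lra]. now rewrite sqrt_pow2.
Qed.

Lemma Mratio (u v : R) : 0 < u -> 0 < v -> sqrt (u^3) / sqrt (v^3) = rr u v.
Proof.
  intros Hu Hv. rewrite !Msqrt by lra. unfold rr. rewrite sqrt_div_alt by lra.
  assert (0 < sqrt v) by (apply sqrt_lt_R0; lra). field. lra.
Qed.

Lemma Mpos (t : R) : 0 < t -> 0 < sqrt (t^3).
Proof. intros. apply sqrt_lt_R0. apply pow_lt. lra. Qed.

Lemma core (m_1 m0 m1 m2 m3 d0 d1 d2 G : R) :
 0<m_1 -> 0<m0 -> 0<m1 -> 0<m2 -> 0<m3 -> 0<d0 -> 0<d1 -> 0<d2 ->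
 0 < 2*d1+d0+d2 - 2*(m2/m1)*d2 - 2*(m_1/m0)*d0 ->
 0 < (m2/m1)*(m3/m2)*d2 - (2*d1+d0+d2 - (m2/m1)*d2 - (m_1/m0)*d0 - (m_1/m0)/(m2/m1)*d0) ->
 m1/m_1 < G -> G < m2/m_1 ->
 m2/m0 < m1/(m0*d1*d2) * (2*d1^2 + d0*d1 + d1*d2 - m2/m1*d1*d2 - m_1/m0*d0*d1 - m1/(m0*G)*d0*d1)
 /\ m1/(m0*d1*d2) * (2*d1^2 + d0*d1 + d1*d2 - m2/m1*d1*d2 - m_1/m0*d0*d1 - m1/(m0*G)*d0*d1) < m3/m0.
Proof.
  intros H_1 H0 H1 H2 H3 Hd0 Hd1 Hd2 HL HU HG1 HG2.
  assert (HG : 0 < G). { assert (0 < m1/m_1) by (apply Rdiv_lt_0_compat; lra). lra. }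
  assert (Ha : m1 < m_1*G).
  { assert (E: m_1*(m1/m_1) = m1) by (field; lra).
    rewrite <- E at 1. apply Rmult_lt_compat_l; lra. }
  assert (Hb : m_1*G < m2).
  { assert (E: m_1*(m2/m_1) = m2) by (field; lra).
    rewrite <- E. apply Rmult_lt_compat_l; lra. }
  assert (Ht1 : 0 < m_1/m0 - m1/(m0*G)).
  { replace (m_1/m0 - m1/(m0*G)) with ((m_1*G - m1)/(m0*G)) by (field; lra).
    apply Rdiv_lt_0_compat; nra. }
  assert (Ht2 : 0 < m1/(m0*G) - (m_1/m0)/(m2/m1)).
  { replace (m1/(m0*G) - (m_1/m0)/(m2/m1)) with (m1*(m2 - m_1*G)/(m0*G*m2)) by (field; lra).
    apply Rdiv_lt_0_compat; repeat apply Rmult_lt_0_compat; lra. }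
  assert (HA : 0 < m1/(m0*d1*d2) * d1).
  { apply Rmult_lt_0_compat; [apply Rdiv_lt_0_compat|]; try lra.
    apply Rmult_lt_0_compat; [apply Rmult_lt_0_compat|]; lra. }
  split.
  - assert (E : m1/(m0*d1*d2) * (2*d1^2 + d0*d1 + d1*d2 - m2/m1*d1*d2 - m_1/m0*d0*d1 - m1/(m0*G)*d0*d1) - m2/m0
      = m1/(m0*d1*d2) * d1 * (2*d1+d0+d2 - 2*(m2/m1)*d2 - (m_1/m0)*d0 - m1/(m0*G)*d0)).
    { field. repeat split; lra. }
    assert (0 < 2*d1+d0+d2 - 2*(m2/m1)*d2 - (m_1/m0)*d0 - m1/(m0*G)*d0).
    { assert (0 < (m_1/m0 - m1/(m0*G))*d0) by (apply Rmult_lt_0_compat; lra). lra. }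
    assert (0 < m1/(m0*d1*d2) * d1 * (2*d1+d0+d2 - 2*(m2/m1)*d2 - (m_1/m0)*d0 - m1/(m0*G)*d0))
      by (apply Rmult_lt_0_compat; lra).
    lra.
  - assert (E : m3/m0 - m1/(m0*d1*d2) * (2*d1^2 + d0*d1 + d1*d2 - m2/m1*d1*d2 - m_1/m0*d0*d1 - m1/(m0*G)*d0*d1)
      = m1/(m0*d1*d2) * d1 * ((m2/m1)*(m3/m2)*d2 - (2*d1+d0+d2 - (m2/m1)*d2 - (m_1/m0)*d0 - m1/(m0*G)*d0))).
    { field. repeat split; lra. }
    assert (0 < (m2/m1)*(m3/m2)*d2 - (2*d1+d0+d2 - (m2/m1)*d2 - (m_1/m0)*d0 - m1/(m0*G)*d0)).
    { assert (0 < (m1/(m0*G) - (m_1/m0)/(m2/m1))*d0) by (apply Rmult_lt_0_compat; lra). lra. }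
    assert (0 < m1/(m0*d1*d2) * d1 * ((m2/m1)*(m3/m2)*d2 - (2*d1+d0+d2 - (m2/m1)*d2 - (m_1/m0)*d0 - m1/(m0*G)*d0)))
      by (apply Rmult_lt_0_compat; lra).
    lra.
Qed.

Lemma step_abs (N G : R) : 2 <= N ->
  sqrt ((N+1)^3) / sqrt ((N-1)^3) < G -> G < sqrt ((N+2)^3) / sqrt ((N-1)^3) ->
  sqrt ((N+2)^3) / sqrt (N^3) <
    sqrt ((N+1)^3) / (sqrt (N^3) * ((N+3)/(N+2)) * ((N+4)/(N+3))) *
    (2 * ((N+3)/(N+2))^2 + (N+2)/(N+1) * ((N+3)/(N+2)) + (N+3)/(N+2) * ((N+4)/(N+3))
     - sqrt ((N+2)^3) / sqrt ((N+1)^3) * ((N+3)/(N+2)) * ((N+4)/(N+3))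
     - sqrt ((N-1)^3) / sqrt (N^3) * ((N+2)/(N+1)) * ((N+3)/(N+2))
     - sqrt ((N+1)^3) / (sqrt (N^3) * G) * ((N+2)/(N+1)) * ((N+3)/(N+2)))
  /\
    sqrt ((N+1)^3) / (sqrt (N^3) * ((N+3)/(N+2)) * ((N+4)/(N+3))) *
    (2 * ((N+3)/(N+2))^2 + (N+2)/(N+1) * ((N+3)/(N+2)) + (N+3)/(N+2) * ((N+4)/(N+3))
     - sqrt ((N+2)^3) / sqrt ((N+1)^3) * ((N+3)/(N+2)) * ((N+4)/(N+3))
     - sqrt ((N-1)^3) / sqrt (N^3) * ((N+2)/(N+1)) * ((N+3)/(N+2))
     - sqrt ((N+1)^3) / (sqrt (N^3) * G) * ((N+2)/(N+1)) * ((N+3)/(N+2)))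
  < sqrt ((N+3)^3) / sqrt (N^3).
Proof.
  intros HN H1 H2.
  assert (Pd0 : 0 < (N+2)/(N+1)) by (apply Rdiv_lt_0_compat; lra).
  assert (Pd1 : 0 < (N+3)/(N+2)) by (apply Rdiv_lt_0_compat; lra).
  assert (Pd2 : 0 < (N+4)/(N+3)) by (apply Rdiv_lt_0_compat; lra).
  apply core; try (apply Mpos; lra); try assumption.
  - rewrite !Mratio by lra.
    pose proof (rr_UB (N+2) (N+1) ltac:(lra) ltac:(lra)).
    pose proof (rr_UB (N-1) N ltac:(lra) ltac:(lra)).
    pose proof (Lrat N HN).
    assert (rr (N+2) (N+1) * ((N+4)/(N+3)) <= UB (N+2) (N+1) * ((N+4)/(N+3)))
      by (apply Rmult_le_compat_r; lra).
    assert (rr (N-1) N * ((N+2)/(N+1)) <= UB (N-1) N * ((N+2)/(N+1)))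
      by (apply Rmult_le_compat_r; lra).
    lra.
  - rewrite !Mratio by lra.
    pose proof (rr_UB (N+2) (N+1) ltac:(lra) ltac:(lra)) as Ub.
    pose proof (rr_LB (N+2) (N+1) ltac:(lra) ltac:(lra)) as Lb.
    pose proof (rr_LB (N+3) (N+2) ltac:(lra) ltac:(lra)) as Lc.
    pose proof (rr_LB (N-1) N ltac:(lra) ltac:(lra)) as Lx.
    pose proof (LB_pos (N+2) (N+1) ltac:(lra) ltac:(lra)).
    pose proof (LB_pos (N+3) (N+2) ltac:(lra) ltac:(lra)).
    pose proof (LB_pos (N-1) N ltac:(lra) ltac:(lra)).
    pose proof (Urat N HN).
    assert (LB (N+2) (N+1) * LB (N+3) (N+2) <= rr (N+2) (N+1) * rr (N+3) (N+2))
      by (apply Rmult_le_compat; lra).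
    assert (LB (N+2) (N+1) * LB (N+3) (N+2) * ((N+4)/(N+3)) <= rr (N+2) (N+1) * rr (N+3) (N+2) * ((N+4)/(N+3)))
      by (apply Rmult_le_compat_r; lra).
    assert (LB (N+2) (N+1) * ((N+4)/(N+3)) <= rr (N+2) (N+1) * ((N+4)/(N+3)))
      by (apply Rmult_le_compat_r; lra).
    assert (LB (N-1) N * ((N+2)/(N+1)) <= rr (N-1) N * ((N+2)/(N+1)))
      by (apply Rmult_le_compat_r; lra).
    assert (LB (N-1) N / UB (N+2) (N+1) <= rr (N-1) N / rr (N+2) (N+1)).
    { unfold Rdiv. apply Rmult_le_compat; try lra.
      apply Rlt_le, Rinv_0_lt_compat; lra.
      apply Rinv_le_contravar; lra. }
    assert (LB (N-1) N / UB (N+2) (N+1) * ((N+2)/(N+1)) <= rr (N-1) N / rr (N+2) (N+1) * ((N+2)/(N+1)))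
      by (apply Rmult_le_compat_r; lra).
    lra.
Qed.

Lemma mu_pos (j : nat) : (1 <= j)%nat -> 0 < mu j.
Proof.
  intros Hj. unfold mu. apply Mpos. apply lt_0_INR. lia.
Qed.

Lemma INR_sq : forall a, INR (S a) = INR a + 1.
Proof. exact S_INR. Qed.

Lemma base : mu 3 / mu 1 < g 1 /\ g 1 < mu 4 / mu 1.
Proof.
  assert (E1 : mu 1 = 1) by (unfold mu; replace (INR 1 ^ 3) with 1 by (simpl; ring); apply sqrt_1).
  assert (E2 : mu 2 = 2 * sqrt 2).
  { unfold mu. rewrite Msqrt by (simpl; lra). f_equal; simpl; f_equal; ring. }
  assert (E3 : mu 3 = 3 * sqrt 3).
  { unfold mu. rewrite Msqrt by (simpl; lra). f_equal; simpl; [|f_equal]; ring. }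
  assert (E4 : mu 4 = 8).
  { unfold mu. replace (INR 4 ^ 3) with (8^2) by (simpl; ring). apply sqrt_pow2; lra. }
  assert (D1 : delta 1 = 3/2) by (unfold delta; simpl; field).
  assert (D2 : delta 2 = 4/3) by (unfold delta; simpl; field).
  assert (D3 : delta 3 = 5/4) by (unfold delta; simpl; field).
  simpl g. unfold g1. rewrite E1, E2, E3, E4, D1, D2, D3.
  assert (S2 : sqrt 2 * sqrt 2 = 2) by (apply sqrt_sqrt; lra).
  assert (S3 : sqrt 3 * sqrt 3 = 3) by (apply sqrt_sqrt; lra).
  assert (P2 : 0 <= sqrt 2) by apply sqrt_pos.
  assert (P3 : 0 <= sqrt 3) by apply sqrt_pos.
  assert (B2l : 1.414 < sqrt 2) by nra.
  assert (B2u : sqrt 2 < 1.4143) by nra.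
  assert (B3l : 1.732 < sqrt 3) by nra.
  assert (B3u : sqrt 3 < 1.7321) by nra.
  split; field_simplify; lra.
Qed.

Lemma mainQ (k : nat) :
  mu (S k + 2) / mu (S k) < g (S k) /\ g (S k) < mu (S k + 3) / mu (S k).
Proof.
  induction k as [|k IH].
  - exact base.
  - change (g (S (S k))) with (gstep (S (S k)) (g (S k))).
    set (n := S (S k)) in *.
    set (N := INR n).
    assert (HN : 2 <= N).
    { unfold N, n. rewrite !S_INR. pose proof (pos_INR k). lra. }
    assert (I0 : INR (S k) = N - 1) by (unfold N, n; rewrite (S_INR (S k)); lra).
    assert (Ik : forall c, INR (n + c) = N + INR c) by (intro c; rewrite plus_INR; reflexivity).
    assert (Ik' : forall c, INR (S k + c) = N - 1 + INR c) by (intro c; rewrite plus_INR, I0; reflexivity).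
    assert (C1 : INR 1 = 1) by reflexivity.
    assert (C2 : INR 2 = 2) by (simpl; lra).
    assert (C3 : INR 3 = 3) by (simpl; lra).
    assert (M0 : mu (S k) = sqrt ((N-1)^3)) by (unfold mu; now rewrite I0).
    assert (Ma : mu (S k + 2) = sqrt ((N+1)^3))
      by (unfold mu; rewrite Ik', C2; f_equal; ring).
    assert (Mb : mu (S k + 3) = sqrt ((N+2)^3))
      by (unfold mu; rewrite Ik', C3; f_equal; ring).
    assert (Mn : mu n = sqrt (N^3)) by reflexivity.
    assert (Mn1 : mu (n+1) = sqrt ((N+1)^3)) by (unfold mu; rewrite Ik, C1; reflexivity).
    assert (Mn2 : mu (n+2) = sqrt ((N+2)^3)) by (unfold mu; rewrite Ik, C2; reflexivity).
    assert (Mn3 : mu (n+3) = sqrt ((N+3)^3)) by (unfold mu; rewrite Ik, C3; reflexivity).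
    assert (Mnm : mu (n-1) = sqrt ((N-1)^3)).
    { replace (n-1)%nat with (S k) by (unfold n; lia). exact M0. }
    assert (Dn : delta n = (N+2)/(N+1)) by reflexivity.
    assert (Dn1 : delta (n+1) = (N+3)/(N+2)).
    { unfold delta. rewrite Ik, C1. f_equal; ring. }
    assert (Dn2 : delta (n+2) = (N+4)/(N+3)).
    { unfold delta. rewrite Ik, C2. f_equal; ring. }
    replace (S (S k) + 2)%nat with (n+2)%nat by reflexivity.
    replace (S (S k) + 3)%nat with (n+3)%nat by reflexivity.
    fold n.
    rewrite M0, Ma, Mb in IH.
    unfold gstep. rewrite Mn, Mn1, Mn2, Mn3, Mnm, Dn, Dn1, Dn2.
    destruct IH as [IH1 IH2].
    apply step_abs; assumption.
Qed.

Theorem lemma4p2 : forall n : nat, (1 <= n)%nat ->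
  p n * p (n + 1) < g n /\ g n < p n * p (n + 1) * p (n + 2).
Proof.
  intros n Hn. destruct n as [|k]; [lia|].
  pose proof (mainQ k) as [H1 H2].
  assert (P0 : 0 < mu (S k)) by (apply mu_pos; lia).
  assert (P1 : 0 < mu (S k + 1)) by (apply mu_pos; lia).
  assert (P2 : 0 < mu (S k + 2)) by (apply mu_pos; lia).
  unfold p.
  replace (S k + 1 + 1)%nat with (S k + 2)%nat by lia.
  replace (S k + 2 + 1)%nat with (S k + 3)%nat by lia.
  split.
  - replace (mu (S k + 1) / mu (S k) * (mu (S k + 2) / mu (S k + 1)))
      with (mu (S k + 2) / mu (S k)) by (field; lra). exact H1.
  - replace (mu (S k + 1) / mu (S k) * (mu (S k + 2) / mu (S k + 1)) * (mu (S k + 3) / mu (S k + 2)))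
      with (mu (S k + 3) / mu (S k)) by (field; lra). exact H2.
Qed.
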